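(* Let $k$ be an algebraically closed field of characteristic $0$, let $f$ be a nonconstant endomorphism of $\mathbb{P}^n_k$, and let $H\subset\mathbb{P}^n$ be a hypersurface. If every irreducible component of $H$ contains a (nonempty) preperiodic subvariety, then $H$ is dynamically improper under $f$.
   Context: An endomorphism of $\mathbb{P}^n$ is a morphism given by homogeneous forms of a common degree with no common nontrivial zero. A nonempty subvariety $X\subset\mathbb{P}^n$ is preperiodic under $f$ if for every irreducible component $Z$ of $X$ there exist distinct nonnegative integers $s,t$ with $f^s(Z)=f^t(Z)$. A hypersurface $H$ is improper under $f$ if for every irreducible component $Z$ of $H$ there exist integers $0\le i_0<\dots<i_n$ with $f^{i_0}(Z)\cap\dots\cap f^{i_n}(Z)\neq\varnothing$; it is dynamically improper under $f$ if it is improper under $f^r$ for every $r>0$. *)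

(* Defs.v *)
(* Classical projective geometry over
   an algebraically closed field k: points of P^n are represented by nonzero
   vectors v : 'I_(n.+1) -> k (homogeneous coordinates), and subsets of P^n by
   predicates on such vectors that are invariant under nonzero scaling. *)
From HB Require Import structures.
From mathcomp Require Import all_boot all_algebra.
From mathcomp Require Import mpoly.
Set Implicit Arguments. Unset Strict Implicit. Unset Printing Implicit Defensive.
Import GRing.Theory.
Local Open Scope ring_scope.

Section Proj.
Variables (k : fieldType) (n : nat).

Definition hvec := 'I_n.+1 -> k.
Definition nonzero (v : hvec) : Prop := exists i, v i != 0.

Definition pset := hvec -> Prop.
Definition psub (A B : pset) : Prop := forall v, A v -> B v.
Definition peq (A B : pset) : Prop := forall v, A v <-> B v.

Definition is_homog (p : {mpoly k[n.+1]}) : Prop := exists d : nat, p \is d.-homog.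

Definition zero_locus (S : {mpoly k[n.+1]} -> Prop) : pset :=
  fun v => nonzero v /\ forall p, S p -> p.@[v] = 0.

Definition zclosed (X : pset) : Prop :=
  exists S : {mpoly k[n.+1]} -> Prop,
    (forall p, S p -> is_homog p) /\ peq X (zero_locus S).

Definition subvariety (X : pset) : Prop := zclosed X /\ exists v, X v.

Definition zirreducible (Z : pset) : Prop :=
  zclosed Z /\ (exists v, Z v) /\
  forall A B : pset, zclosed A -> zclosed B ->
    psub Z (fun v => A v \/ B v) -> psub Z A \/ psub Z B.

Definition irr_component (X Z : pset) : Prop :=
  zirreducible Z /\ psub Z X /\
  forall Z', zirreducible Z' -> psub Z Z' -> psub Z' X -> psub Z' Z.

Definition hypersurface (H : pset) : Prop :=
  exists (p : {mpoly k[n.+1]}) (d : nat),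
    (0 < d)%N /\ p != 0 /\ p \is d.-homog /\ peq H (zero_locus (fun q => q = p)).

Definition endomorphism (F : 'I_n.+1 -> {mpoly k[n.+1]}) (d : nat) : Prop :=
  (forall i, F i \is d.-homog) /\
  (forall v : hvec, (forall i, (F i).@[v] = 0) -> forall i, v i = 0).

Definition pimage (F : 'I_n.+1 -> {mpoly k[n.+1]}) (Z : pset) : pset :=
  fun w => exists v mu, Z v /\ mu != 0 /\ forall i, w i = mu * (F i).@[v].

Definition piter (F : 'I_n.+1 -> {mpoly k[n.+1]}) (s : nat) (Z : pset) : pset :=
  iter s (pimage F) Z.

Definition preperiodic (F : 'I_n.+1 -> {mpoly k[n.+1]}) (X : pset) : Prop :=
  forall Z, irr_component X Z ->
    exists s t : nat, s <> t /\ peq (piter F s Z) (piter F t Z).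

Definition improper_iter (F : 'I_n.+1 -> {mpoly k[n.+1]}) (r : nat) (H : pset) : Prop :=
  forall Z, irr_component H Z ->
    exists idx : 'I_n.+1 -> nat,
      (forall a b : 'I_n.+1, (a < b)%N -> (idx a < idx b)%N) /\
      exists v, forall j : 'I_n.+1, piter F (r * idx j) Z v.

Definition dyn_improper (F : 'I_n.+1 -> {mpoly k[n.+1]}) (H : pset) : Prop :=
  forall r : nat, (0 < r)%N -> improper_iter F r H.

End Proj.

(* Main.v *)
Require Import Defs.
From HB Require Import structures.
From mathcomp Require Import all_boot all_algebra.
From mathcomp Require Import mpoly.
From mathcomp Require classical_sets.
From mathcomp Require Import zify.
From Stdlib Require Import Classical.
Import GRing.Theory.
Local Open Scope ring_scope.

Lemma zorn_sets (T : Type) (P : (T -> Prop) -> Prop) :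
  (forall Fm : (T -> Prop) -> Prop, (forall X, Fm X -> P X) ->
     (forall A B, Fm A -> Fm B -> (forall x, A x -> B x) \/ (forall x, B x -> A x)) ->
     P (fun x => exists X, Fm X /\ X x)) ->
  exists A, P A /\ forall B, (forall x, A x -> B x) -> P B -> forall x, B x -> A x.
Proof.
move=> H.
have : exists A, P A /\ (forall B, classical_sets.proper A B -> ~ P B).
  apply: classical_sets.Zorn_bigcup => Fm FP Ftot.
  have -> : classical_sets.bigcup Fm id = (fun x => exists X, Fm X /\ X x).
    apply: boolp.funext => x; apply: boolp.propext; split.
      by case=> X FX Xx; exists X.
    by case=> X [FX Xx]; exists X.
  by apply: H => // A B FA FB; apply: Ftot.
case=> A [PA HA]; exists A; split => // B AB PB x Bx.
apply: NNPP => nAx; apply: (HA B) => //; split => //.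
by move=> h; apply: nAx; apply: h.
Qed.

Section Aux.
Variables (k : fieldType) (n : nat).
Implicit Types (A B X Z : pset k n).
Variable F : 'I_n.+1 -> {mpoly k[n.+1]}.

Lemma pimage_mono A B : psub A B -> psub (pimage F A) (pimage F B).
Proof. by move=> AB w [v [mu [Av [mu0 E]]]]; exists v, mu; split => //; apply: AB. Qed.

Lemma piter_mono m A B : psub A B -> psub (piter F m A) (piter F m B).
Proof. by move=> AB; elim: m => [|m IH] //=; apply: pimage_mono. Qed.

Lemma pimage_peq A B : peq A B -> peq (pimage F A) (pimage F B).
Proof.
move=> AB w; split; apply: pimage_mono => v; by case: (AB v).
Qed.

Lemma piter_peq m A B : peq A B -> peq (piter F m A) (piter F m B).
Proof. by move=> AB; elim: m => [|m IH] //=; apply: pimage_peq. Qed.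

Lemma piter_add a b A : piter F (a + b) A = piter F a (piter F b A).
Proof. by rewrite /piter iterD. Qed.

Lemma piter_ne m A : (exists v, A v) -> exists v, piter F m A v.
Proof.
elim: m => [|m IH] //= Ane.
have [v Hv] := IH Ane.
exists (fun i => (F i).@[v]), v, 1; split => //; split; first exact: oner_neq0.
by move=> i; rewrite mul1r.
Qed.

Definition cl A : pset k n :=
  zero_locus (fun p => is_homog p /\ forall v, A v -> p.@[v] = 0).

Lemma cl_closed A : zclosed (cl A).
Proof. by exists (fun p => is_homog p /\ forall v, A v -> p.@[v] = 0); split => // p []. Qed.

Lemma cl_min A B : zclosed B -> psub A B -> psub (cl A) B.
Proof.
move=> [S [Sh SB]] AB v [nzv Hv]; apply/SB; split => // p Sp.
apply: Hv; split; first exact: Sh.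
by move=> w Aw; have [_ ->] := (SB w).1 (AB w Aw).
Qed.

Lemma cl_ext A : (forall v, A v -> nonzero v) -> psub A (cl A).
Proof. by move=> Anz v Av; split; [exact: Anz | move=> p [_ ->]]. Qed.

Definition irrP A := forall A1 A2 : pset k n, zclosed A1 -> zclosed A2 ->
    psub A (fun v => A1 v \/ A2 v) -> psub A A1 \/ psub A A2.

Lemma exists_component X : subvariety X -> exists W, irr_component X W.
Proof.
move=> [Xc [p Xp]].
pose P (B : pset k n) := psub B X /\ irrP B.
have [A [[AX Airr] Amax]] : exists A, P A /\ forall B, (forall x, A x -> B x) -> P B -> forall x, B x -> A x.
  apply: zorn_sets => Fm FP Ftot; split.
    by move=> v [Y [FY Yv]]; apply: (FP Y FY).1.
  move=> A1 A2 c1 c2 sub.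
  case: (classic (forall Y, Fm Y -> psub Y A1)) => [all1|].
    by left => v [Y [FY Yv]]; apply: all1 FY _ Yv.
  move=> /not_all_ex_not [C0 HC0].
  have [FC0 nC0] := imply_to_and _ _ HC0.
  have C02 : psub C0 A2.
    have : psub C0 (fun v => A1 v \/ A2 v) by move=> v C0v; apply: sub; exists C0.
    by case/((FP C0 FC0).2 A1 A2 c1 c2).
  right => v [Y [FY Yv]].
  have : psub Y (fun v => A1 v \/ A2 v) by move=> w Yw; apply: sub; exists Y.
  case/((FP Y FY).2 A1 A2 c1 c2) => [YA1|]; last by apply.
    case: (Ftot Y C0 FY FC0) => [YC0|C0Y]; first by apply: C02; apply: YC0.
    by exfalso; apply: nC0 => w C0w; apply: YA1; apply: C0Y.
have Xnz : forall v, X v -> nonzero v.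
  by move=> v Xv; case: Xc => S [_ XS]; have [] := (XS v).1 Xv.
have Anz : forall v, A v -> nonzero v by move=> v Av; apply: Xnz; apply: AX.
have PclA : P (cl A).
  split; first by apply: cl_min.
  move=> A1 A2 c1 c2 sub.
  have : psub A (fun v => A1 v \/ A2 v) by move=> v Av; apply: sub; apply: cl_ext.
  case/(Airr A1 A2 c1 c2) => h.
    by left; apply: cl_min.
  by right; apply: cl_min.
have clA : psub (cl A) A by apply: Amax => //; apply: cl_ext.
have Acl : zclosed A.
  have [S [Sh E]] := cl_closed A.
  exists S; split => // v; split => [Av|h].
    by apply/E; apply: cl_ext.
  by apply: clA; apply/E.
have Ane : exists v, A v.
  apply: NNPP => hno.
  have Pp : P (fun v => v = p).
    split; first by move=> v ->.
    move=> A1 A2 _ _ sub; case: (sub p erefl) => h; [left|right]; by move=> v ->.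
  apply hno; exists p; apply: (Amax _ _ Pp) => // v Av.
  by exfalso; apply hno; exists v.
exists A; split; first by split.
split => // Z' [Z'c [_ Z'irr]] AZ' Z'X.
by apply: Amax.
Qed.

End Aux.

Theorem mainTheorem7 (k : closedFieldType) (n : nat)
  (F : 'I_n.+1 -> {mpoly k[n.+1]}) (d : nat) (H : pset k n) :
  [pchar k] =i pred0 ->
  endomorphism F d -> (0 < d)%N ->
  hypersurface H ->
  (forall Z, irr_component H Z ->
     exists X, subvariety X /\ psub X Z /\ preperiodic F X) ->
  dyn_improper F H.
Proof.
move=> _ _ _ _ Hyp r r0 Z HZ.
have [X [Xsv [XZ Xpre]]] := Hyp Z HZ.
have [W XW] := @exists_component _ _ X Xsv.
have [s [t [st E]]] := Xpre W XW.
have Wne : exists v, W v by case: XW => [[_ [? _]] _].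
have WZ : psub W Z by move=> v Wv; apply: XZ; case: XW => [_ [WX _]]; apply: WX.
wlog lt_st : s t st E / (s < t)%N.
  move=> wl; case: (ltngtP s t) => h; first exact: (wl s t).
    by apply: (wl t s) => // [/esym //|v]; split => /(E v).
  by exfalso; apply: st.
have [p [p0 tE]] : exists p, (0 < p)%N /\ t = (s + p)%N.
  by exists (t - s)%N; split; [rewrite subn_gt0 | lia].
subst t.
have Q : forall a, peq (piter F (a + s) W) (piter F (a + (s + p)) W).
  by move=> a; rewrite (@piter_add _ _ F a s) (@piter_add _ _ F a (s + p)); apply: piter_peq.
have K : forall c, peq (piter F s W) (piter F (s + c * p) W).
  elim => [|c IH] v; first by rewrite mul0n addn0.
  rewrite (IH v).
  have := Q (c * p)%N v.
  have -> : (c * p + s = s + c * p)%N by lia.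
  have -> : (c * p + (s + p) = s + c.+1 * p)%N by rewrite mulSn; lia.
  done.
pose m0 := ((r - 1) * s)%N.
have [v0 Hv0] := @piter_ne _ _ F (m0 + s) W Wne.
exists (fun j : 'I_n.+1 => (s + j * p)%N); split.
  move=> a b ab; rewrite ltn_add2l ltn_mul2r p0 //.
exists v0 => j.
apply: (@piter_mono _ _ F _ _ _ WZ).
have -> : (r * (s + j * p) = m0 + (s + (r * j) * p))%N.
  rewrite /m0 mulnDr mulnA mulnBl mul1n; have : (s <= r * s)%N by rewrite leq_pmull.
  lia.
rewrite (@piter_add _ _ F m0).
have := @piter_peq _ _ F m0 _ _ (K (r * j)%N) v0.
by rewrite -(@piter_add _ _ F m0) => <-.
Qed.
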